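(* Let $\mathfrak{R}$ be an alternative ring with a nontrivial idempotent $e_1$ and Peirce decomposition $\mathfrak{R}=\mathfrak{R}_{11}\oplus\mathfrak{R}_{12}\oplus\mathfrak{R}_{21}\oplus\mathfrak{R}_{22}$, satisfying: (i) if $a_{11}\in\mathfrak{R}_{11}$, $a_{22}\in\mathfrak{R}_{22}$ and $[a_{11}+a_{22},\mathfrak{R}_{12}]=0$, then $a_{11}+a_{22}\in\mathcal{Z}(\mathfrak{R})$; (ii) if $a_{11}\in\mathfrak{R}_{11}$, $a_{22}\in\mathfrak{R}_{22}$ and $[a_{11}+a_{22},\mathfrak{R}_{21}]=0$, then $a_{11}+a_{22}\in\mathcal{Z}(\mathfrak{R})$. Let $\mathcal{D}$ be a multiplicative Lie-type derivation of $\mathfrak{R}$. Then for any $a_{12}\in\mathfrak{R}_{12}$ and $b_{21}\in\mathfrak{R}_{21}$, $\mathcal{D}(a_{12}+b_{21})=\mathcal{D}(a_{12})+\mathcal{D}(b_{21})$.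
   Context: Rings are not assumed associative or unital. The associator is $(x,y,z)=(xy)z-x(yz)$; $\mathfrak{R}$ is alternative if $(x,x,y)=0=(y,x,x)$ for all $x,y$. $[x,y]=xy-yx$ and $\mathcal{Z}(\mathfrak{R})=\{r: [r,x]=0\ \forall x\in\mathfrak{R}\}$. Define $p_1(x)=x$, $p_n(x_1,\dots,x_n)=[p_{n-1}(x_1,\dots,x_{n-1}),x_n]$. For $n\ge2$, a (not necessarily additive) map $\mathcal{D}\colon\mathfrak{R}\to\mathfrak{R}$ is a multiplicative Lie $n$-derivation if $\mathcal{D}(p_n(x_1,\dots,x_n))=\sum_{i=1}^n p_n(x_1,\dots,\mathcal{D}(x_i),\dots,x_n)$ for all $x_i\in\mathfrak{R}$; a multiplicative Lie-type derivation is a multiplicative Lie $n$-derivation for some $n\ge2$. A nontrivial idempotent is $e_1\ne0$ with $e_1^2=e_1$ which is not a multiplicative identity. With $e_2a:=a-e_1a$, $ae_2:=a-ae_1$, set $\mathfrak{R}_{ij}=e_i\mathfrak{R}e_j$ ($i,j=1,2$), so $\mathfrak{R}=\bigoplus_{i,j}\mathfrak{R}_{ij}$. *)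

(* Defs.v *)
Record NARing := {
  carrier :> Type;
  zero : carrier;
  add : carrier -> carrier -> carrier;
  opp : carrier -> carrier;
  mul : carrier -> carrier -> carrier;
  addA : forall x y z, add x (add y z) = add (add x y) z;
  addC : forall x y, add x y = add y x;
  add0r : forall x, add zero x = x;
  addNr : forall x, add (opp x) x = zero;
  mulDl : forall x y z, mul (add x y) z = add (mul x z) (mul y z);
  mulDr : forall x y z, mul x (add y z) = add (mul x y) (mul x z)
}.

Arguments zero {_}.
Arguments add {_}.
Arguments opp {_}.
Arguments mul {_}.

Definition sub {R : NARing} (x y : R) : R := add x (opp y).

Definition associator {R : NARing} (x y z : R) : R :=
  sub (mul (mul x y) z) (mul x (mul y z)).

Definition alternative (R : NARing) : Prop :=
  forall x y : R, associator x x y = zero /\ associator y x x = zero.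

Definition lie {R : NARing} (x y : R) : R := sub (mul x y) (mul y x).

Definition center {R : NARing} (r : R) : Prop := forall x : R, lie r x = zero.

(* Lie polynomials, indexed from 0: pcomm k xs = p_{k+1}(xs 0, ..., xs k).
   pcomm 0 xs = xs 0 ;  pcomm (k+1) xs = [pcomm k xs, xs (k+1)]. *)
Fixpoint pcomm {R : NARing} (k : nat) (xs : nat -> R) : R :=
  match k with
  | O => xs O
  | S k' => lie (pcomm k' xs) (xs (S k'))
  end.

Definition p_ {R : NARing} (n : nat) (xs : nat -> R) : R := pcomm (Nat.pred n) xs.

Fixpoint sum_lt {R : NARing} (n : nat) (f : nat -> R) : R :=
  match n with
  | O => zero
  | S k => add (sum_lt k f) (f k)
  end.

Definition upd {R : NARing} (xs : nat -> R) (i : nat) (y : R) : nat -> R :=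
  fun j => if Nat.eqb j i then y else xs j.

(* multiplicative (not necessarily additive) Lie n-derivation:
   D(p_n(x_1..x_n)) = sum_i p_n(x_1, .., D(x_i), .., x_n). Arguments are
   xs 0, ..., xs (n-1); later entries of xs are irrelevant. *)
Definition lie_n_derivation {R : NARing} (n : nat) (D : R -> R) : Prop :=
  forall xs : nat -> R,
    D (p_ n xs) = sum_lt n (fun i => p_ n (upd xs i (D (xs i)))).

Definition lie_type_derivation {R : NARing} (D : R -> R) : Prop :=
  exists n : nat, 2 <= n /\ lie_n_derivation n D.

Definition nontrivial_idempotent {R : NARing} (e : R) : Prop :=
  e <> zero /\ mul e e = e /\ ~ (forall x : R, mul e x = x /\ mul x e = x).

(* Peirce components: e_1 a = e a, e_2 a = a - e a, a e_1 = a e, a e_2 = a - a e;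
   R_ij = e_i R e_j = { (e_i x) e_j | x in R }. *)
Definition lmul_e {R : NARing} (e : R) (i : nat) (x : R) : R :=
  if Nat.eqb i 1 then mul e x else sub x (mul e x).
Definition rmul_e {R : NARing} (e : R) (j : nat) (x : R) : R :=
  if Nat.eqb j 1 then mul x e else sub x (mul x e).

Definition peirce {R : NARing} (e : R) (i j : nat) (a : R) : Prop :=
  exists x : R, a = rmul_e e j (lmul_e e i x).

(* Main.v *)
Require Import Defs.
From Stdlib Require Import List Arith Lia Bool.
Import ListNotations.

Lemma addr0 {R : NARing} (x : R) : add x zero = x.
Proof. rewrite addC; apply add0r. Qed.
Lemma addrN {R : NARing} (x : R) : add x (opp x) = zero.
Proof. rewrite addC; apply addNr. Qed.
Lemma add_cancel_l {R : NARing} (x y z : R) : add x y = add x z -> y = z.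
Proof.
  intros H. transitivity (add (opp x) (add x y)).
  - rewrite addA, addNr, add0r; reflexivity.
  - rewrite H, addA, addNr, add0r; reflexivity.
Qed.
Lemma opp_unique {R : NARing} (x y : R) : add x y = zero -> y = opp x.
Proof. intros H. apply (add_cancel_l x). rewrite H, addrN. reflexivity. Qed.
Lemma oppK {R : NARing} (x : R) : opp (opp x) = x.
Proof. symmetry; apply opp_unique; apply addNr. Qed.
Lemma opp0 {R : NARing} : opp (@zero R) = zero.
Proof. symmetry; apply opp_unique; apply add0r. Qed.
Lemma add_swap {R : NARing} (a b c : R) : add a (add b c) = add b (add a c).
Proof. rewrite !addA, (addC _ a b). reflexivity. Qed.
Lemma add4 {R : NARing} (a b c d : R) : add (add a b) (add c d) = add (add a c) (add b d).
Proof. rewrite <- !addA, (add_swap b c d). reflexivity. Qed.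
Lemma opp_add {R : NARing} (x y : R) : opp (add x y) = add (opp x) (opp y).
Proof.
  symmetry; apply opp_unique. rewrite add4, !addrN, add0r. reflexivity.
Qed.
Lemma add_cancel_r {R : NARing} (x y z : R) : add x z = add y z -> x = y.
Proof. intros H. rewrite (addC _ x z), (addC _ y z) in H. exact (add_cancel_l _ _ _ H). Qed.

Inductive gx : Type := GA (n : nat) | G0 | GP (a b : gx) | GN (a : gx).
Fixpoint geval {R : NARing} (env : list R) (t : gx) : R :=
  match t with
  | GA n => nth n env zero
  | G0 => zero
  | GP a b => add (geval env a) (geval env b)
  | GN a => opp (geval env a)
  end.
Fixpoint nsc {R : NARing} (k : nat) (x : R) : R :=
  match k with O => zero | S k => add x (nsc k x) end.
Definition cev {R : NARing} (c : nat * nat) (x : R) : R :=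
  add (nsc (fst c) x) (opp (nsc (snd c) x)).
Fixpoint lev {R : NARing} (env : list R) (l : list (nat * nat)) (i : nat) : R :=
  match l with
  | nil => zero
  | c :: l' => add (cev c (nth i env zero)) (lev env l' (S i))
  end.
Fixpoint ladd (l1 l2 : list (nat * nat)) : list (nat * nat) :=
  match l1, l2 with
  | nil, _ => l2
  | _, nil => l1
  | c1 :: l1', c2 :: l2' => (fst c1 + fst c2, snd c1 + snd c2) :: ladd l1' l2'
  end.
Definition lneg (l : list (nat * nat)) := map (fun c => (snd c, fst c)) l.
Fixpoint lsingle (n : nat) : list (nat * nat) :=
  match n with O => [(1, 0)] | S n' => (0, 0) :: lsingle n' end.
Fixpoint norm (t : gx) : list (nat * nat) :=
  match t with
  | GA n => lsingle n
  | G0 => nil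
  | GP a b => ladd (norm a) (norm b)
  | GN a => lneg (norm a)
  end.
Definition lallzero (l : list (nat * nat)) : bool :=
  forallb (fun c => Nat.eqb (fst c) (snd c)) l.

Lemma nsc_add {R : NARing} a b (x : R) : nsc (a + b) x = add (nsc a x) (nsc b x).
Proof. induction a; simpl. - rewrite add0r; auto. - rewrite IHa, addA; auto. Qed.
Lemma cev_add {R : NARing} p1 n1 p2 n2 (x : R) :
  cev (p1 + p2, n1 + n2) x = add (cev (p1, n1) x) (cev (p2, n2) x).
Proof. unfold cev; simpl. rewrite !nsc_add, opp_add, add4. reflexivity. Qed.
Lemma cev_neg {R : NARing} p n (x : R) : cev (n, p) x = opp (cev (p, n) x).
Proof. unfold cev; simpl. rewrite opp_add, oppK, addC. reflexivity. Qed.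
Lemma lev_ladd {R : NARing} (env : list R) l1 : forall l2 i,
  lev env (ladd l1 l2) i = add (lev env l1 i) (lev env l2 i).
Proof.
  induction l1 as [|c1 l1 IH]; intros [|c2 l2] i; simpl.
  - rewrite add0r; auto.
  - rewrite add0r; auto.
  - rewrite addr0; auto.
  - rewrite IH. destruct c1, c2. rewrite cev_add. simpl. apply add4.
Qed.
Lemma lev_lneg {R : NARing} (env : list R) l : forall i,
  lev env (lneg l) i = opp (lev env l i).
Proof.
  induction l as [|c l IH]; intros i; simpl.
  - rewrite opp0; auto.
  - rewrite IH. destruct c. rewrite (cev_neg n n0). simpl. rewrite opp_add. reflexivity.
Qed.
Lemma lev_single {R : NARing} (env : list R) n : forall i,
  lev env (lsingle n) i = nth (n + i) env zero.
Proof.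
  induction n; intros i; simpl.
  - unfold cev; simpl. rewrite addr0, opp0, !addr0. reflexivity.
  - rewrite IHn. unfold cev; simpl. rewrite opp0, !add0r, Nat.add_succ_r. reflexivity.
Qed.
Lemma norm_sound {R : NARing} (env : list R) t : lev env (norm t) 0 = geval env t.
Proof.
  induction t; simpl.
  - rewrite lev_single, Nat.add_0_r; auto.
  - auto.
  - rewrite lev_ladd, IHt1, IHt2; auto.
  - rewrite lev_lneg, IHt; auto.
Qed.
Lemma lallzero_sound {R : NARing} (env : list R) l : lallzero l = true -> forall i, lev env l i = zero.
Proof.
  induction l as [|c l IH]; intros H i; simpl in *; auto.
  apply andb_true_iff in H as [H1 H2]. rewrite IH by auto. destruct c as [p q]; simpl in H1.
  apply Nat.eqb_eq in H1; subst. unfold cev; simpl. rewrite !addrN, addr0. reflexivity.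
Qed.
Lemma gsound {R : NARing} (env : list R) t1 t2 :
  lallzero (ladd (norm t1) (lneg (norm t2))) = true -> geval env t1 = geval env t2.
Proof.
  intros H. pose proof (lallzero_sound env _ H 0) as H0.
  rewrite lev_ladd, lev_lneg, !norm_sound in H0.
  apply opp_unique in H0. rewrite <- (oppK (geval env t2)), H0, oppK. reflexivity.
Qed.

Ltac lookup x l :=
  match l with
  | cons x _ => constr:(O)
  | cons _ ?l' => let n := lookup x l' in constr:(S n)
  end.
Ltac add_atom x l :=
  match constr:(Set) with
  | _ => let _ := lookup x l in l
  | _ => constr:(cons x l)
  end.
Ltac collect t l :=
  match t with
  | @add _ ?a ?b => let l1 := collect a l in collect b l1
  | @sub _ ?a ?b => let l1 := collect a l in collect b l1
  | @opp _ ?a => collect a l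
  | @zero _ => l
  | _ => add_atom t l
  end.
Ltac reify t l :=
  match t with
  | @add _ ?a ?b => let ra := reify a l in let rb := reify b l in constr:(GP ra rb)
  | @sub _ ?a ?b => let ra := reify a l in let rb := reify b l in constr:(GP ra (GN rb))
  | @opp _ ?a => let ra := reify a l in constr:(GN ra)
  | @zero _ => constr:(G0)
  | _ => let n := lookup t l in constr:(GA n)
  end.
Ltac gnorm :=
  match goal with
  | |- ?x = ?y =>
    let T := type of x in
    let l0 := constr:(@nil T) in
    let l1 := collect x l0 in
    let l := collect y l1 in
    let tx := reify x l in
    let ty := reify y l in
    change (geval l tx = geval l ty); apply gsound; vm_compute; reflexivity
  end.

Lemma test {R : NARing} (a b c : R) : add (sub a b) (add b (opp (opp c))) = add c (sub (add a zero) zero).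
Proof. gnorm. Qed.

Lemma mul0l {R : NARing} (y : R) : mul zero y = zero.
Proof.
  apply (add_cancel_l (mul zero y)). rewrite <- mulDl, add0r, addr0. reflexivity.
Qed.
Lemma mul0r {R : NARing} (y : R) : mul y zero = zero.
Proof.
  apply (add_cancel_l (mul y zero)). rewrite <- mulDr, add0r, addr0. reflexivity.
Qed.
Lemma mulNl {R : NARing} (x y : R) : mul (opp x) y = opp (mul x y).
Proof. apply opp_unique. rewrite <- mulDl, addrN, mul0l. reflexivity. Qed.
Lemma mulNr {R : NARing} (x y : R) : mul x (opp y) = opp (mul x y).
Proof. apply opp_unique. rewrite <- mulDr, addrN, mul0r. reflexivity. Qed.

Ltac mexp := unfold sub; repeat rewrite ?mulDl, ?mulDr, ?mulNl, ?mulNr, ?mul0l, ?mul0r.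

Lemma lie_addl {R : NARing} (x y z : R) : lie (add x y) z = add (lie x z) (lie y z).
Proof. unfold lie; mexp; gnorm. Qed.
Lemma lie_addr {R : NARing} (x y z : R) : lie z (add x y) = add (lie z x) (lie z y).
Proof. unfold lie; mexp; gnorm. Qed.
Lemma lie_oppl {R : NARing} (x z : R) : lie (opp x) z = opp (lie x z).
Proof. unfold lie; mexp; gnorm. Qed.
Lemma lie_oppr {R : NARing} (x z : R) : lie z (opp x) = opp (lie z x).
Proof. unfold lie; mexp; gnorm. Qed.
Lemma lie_anti {R : NARing} (x y : R) : lie x y = opp (lie y x).
Proof. unfold lie; mexp; gnorm. Qed.
Lemma lie_xx {R : NARing} (x : R) : lie x x = zero.
Proof. unfold lie; mexp; gnorm. Qed.
Lemma lie_0l {R : NARing} (x : R) : lie zero x = zero.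
Proof. unfold lie; mexp; gnorm. Qed.
Lemma lie_0r {R : NARing} (x : R) : lie x zero = zero.
Proof. unfold lie; mexp; gnorm. Qed.

Lemma as_expand {R : NARing} (x1 x2 y1 y2 z1 z2 : R) :
  associator (add x1 x2) (add y1 y2) (add z1 z2) =
  add (add (add (associator x1 y1 z1) (associator x1 y1 z2)) (add (associator x1 y2 z1) (associator x1 y2 z2)))
      (add (add (associator x2 y1 z1) (associator x2 y1 z2)) (add (associator x2 y2 z1) (associator x2 y2 z2))).
Proof. unfold associator; mexp; gnorm. Qed.
Lemma as_zero_l {R : NARing} (y z : R) : associator zero y z = zero.
Proof. unfold associator; mexp; gnorm. Qed.
Lemma as_zero_m {R : NARing} (y z : R) : associator y zero z = zero.
Proof. unfold associator; mexp; gnorm. Qed.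
Lemma as_zero_r {R : NARing} (y z : R) : associator y z zero = zero.
Proof. unfold associator; mexp; gnorm. Qed.

Lemma lin_r {R : NARing} (Halt : alternative R) (x y z : R) :
  associator x y z = opp (associator x z y).
Proof.
  apply opp_unique. rewrite addC.
  pose proof (as_expand x zero y z y z) as H.
  rewrite addr0 in H. rewrite (proj2 (Halt (add y z) x)) in H.
  rewrite (proj2 (Halt y x)), (proj2 (Halt z x)), !as_zero_l in H.
  symmetry. rewrite H. gnorm.
Qed.
Lemma lin_l {R : NARing} (Halt : alternative R) (x y z : R) :
  associator x y z = opp (associator y x z).
Proof.
  apply opp_unique. rewrite addC.
  pose proof (as_expand y x y x z zero) as H.
  rewrite addr0 in H. rewrite (proj1 (Halt (add y x) z)) in H.
  rewrite (proj1 (Halt y z)), (proj1 (Halt x z)), !as_zero_r in H.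
  symmetry. rewrite H. gnorm.
Qed.

Lemma as_eq {R : NARing} (x y z : R) : associator x y z = zero -> mul (mul x y) z = mul x (mul y z).
Proof.
  unfold associator, sub. intros H. apply opp_unique in H. rewrite <- (oppK (mul (mul x y) z)), <- H, oppK. reflexivity.
Qed.

Definition P12 {R : NARing} (e a : R) := mul e a = a /\ mul a e = zero.
Definition P21 {R : NARing} (e b : R) := mul e b = zero /\ mul b e = b.

Lemma peirce12 {R : NARing} (Halt : alternative R) (e a : R) : mul e e = e -> peirce e 1 2 a -> P12 e a.
Proof.
  intros Hee [x Hx]. unfold rmul_e, lmul_e in Hx. simpl in Hx. subst a. unfold sub.
  assert (E1 : mul e (mul e x) = mul e x).
  { rewrite <- as_eq, Hee; auto. apply Halt. }
  assert (E2 : forall y, mul (mul y e) e = mul y e).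
  { intros y. rewrite as_eq, Hee; auto. apply Halt. }
  assert (Ef : forall y, mul (mul e y) e = mul e (mul y e)).
  { intros y. apply as_eq. rewrite lin_l by auto. rewrite (proj2 (Halt e y)). apply opp0. }
  split; mexp.
  - rewrite E1, <- Ef, E1. gnorm.
  - rewrite E2. gnorm.
Qed.
Lemma peirce21 {R : NARing} (Halt : alternative R) (e b : R) : mul e e = e -> peirce e 2 1 b -> P21 e b.
Proof.
  intros Hee [x Hx]. unfold rmul_e, lmul_e in Hx. simpl in Hx. subst b. unfold sub.
  assert (E1 : mul e (mul e x) = mul e x).
  { rewrite <- as_eq, Hee; auto. apply Halt. }
  assert (E2 : forall y, mul (mul y e) e = mul y e).
  { intros y. rewrite as_eq, Hee; auto. apply Halt. }
  assert (Ef : forall y, mul (mul e y) e = mul e (mul y e)).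
  { intros y. apply as_eq. rewrite lin_l by auto. rewrite (proj2 (Halt e y)). apply opp0. }
  split; mexp.
  - rewrite <- (Ef (mul e x)), E1, Ef. gnorm.
  - rewrite !E2. gnorm.
Qed.

Lemma J_comm {R : NARing} (Halt : alternative R) (e a b : R) : P12 e a -> P21 e b ->
  lie (lie b a) e = zero.
Proof.
  intros [Ha1 Ha2] [Hb1 Hb2].
  assert (Hbea : associator b e a = zero).
  { unfold associator. rewrite Hb2, Ha1. unfold sub. apply addrN. }
  assert (Haeb : associator a e b = zero).
  { unfold associator. rewrite Ha2, Hb1, mul0l, mul0r. unfold sub. rewrite opp0. apply addr0. }
  assert (F1 : mul (mul b a) e = zero).
  { rewrite as_eq. - rewrite Ha2. apply mul0r. - rewrite lin_r, Hbea by auto. apply opp0. }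
  assert (F2 : mul e (mul b a) = zero).
  { rewrite <- as_eq. - rewrite Hb1. apply mul0l. - rewrite lin_l, Hbea by auto. apply opp0. }
  assert (F3 : mul (mul a b) e = mul a b).
  { rewrite as_eq. - rewrite Hb2. reflexivity. - rewrite lin_r, Haeb by auto. apply opp0. }
  assert (F4 : mul e (mul a b) = mul a b).
  { rewrite <- as_eq. - rewrite Ha1. reflexivity. - rewrite lin_l, Haeb by auto. apply opp0. }
  unfold lie. mexp. rewrite F1, F2, F3, F4. gnorm.
Qed.

Fixpoint chain {R : NARing} (k : nat) (zs : nat -> R) (c : R) : R :=
  match k with O => c | S k' => lie (chain k' zs c) (zs (S (S k'))) end.

Lemma pcomm_chain {R : NARing} k (xs : nat -> R) : pcomm (S k) xs = chain k xs (lie (xs 0) (xs 1)).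
Proof. induction k; simpl; auto. simpl in IHk. rewrite IHk. reflexivity. Qed.
Lemma chain_ext {R : NARing} k (zs zs' : nat -> R) c :
  (forall j, 2 <= j -> zs j = zs' j) -> chain k zs c = chain k zs' c.
Proof. intros H. induction k; simpl; auto. rewrite IHk, H by lia. reflexivity. Qed.
Lemma chain_add {R : NARing} k (zs : nat -> R) c d : chain k zs (add c d) = add (chain k zs c) (chain k zs d).
Proof. induction k; simpl; auto. rewrite IHk, lie_addl. reflexivity. Qed.
Lemma chain_opp {R : NARing} k (zs : nat -> R) c : chain k zs (opp c) = opp (chain k zs c).
Proof. induction k; simpl; auto. rewrite IHk, lie_oppl. reflexivity. Qed.
Lemma chain_zero {R : NARing} k (zs : nat -> R) : chain k zs zero = zero.
Proof. induction k; simpl; auto. rewrite IHk, lie_0l. reflexivity. Qed.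
Lemma chain_kill {R : NARing} k (zs : nat -> R) c : lie c (zs 2) = zero -> chain (S k) zs c = zero.
Proof. intros H. induction k; simpl in *; auto. rewrite IHk, lie_0l. reflexivity. Qed.
Lemma chain_fix {R : NARing} k (e c : R) : lie c e = c -> chain k (fun _ => e) c = c.
Proof. intros H. induction k; simpl; auto. rewrite IHk. auto. Qed.
Lemma chain_neg {R : NARing} k (e c : R) : lie c e = opp c -> chain k (fun _ => e) c = Nat.iter k opp c.
Proof.
  intros H. induction k; simpl; auto. rewrite IHk. clear IHk.
  induction k; simpl; auto. rewrite lie_oppl, IHk. reflexivity.
Qed.
Lemma iter_opp_comm {R : NARing} k (x : R) : Nat.iter k opp (opp x) = opp (Nat.iter k opp x).
Proof. induction k; simpl; auto. rewrite IHk. reflexivity. Qed.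
Lemma iter_opp_inv {R : NARing} k (x : R) : Nat.iter k opp (Nat.iter k opp x) = x.
Proof.
  induction k; simpl; auto. rewrite iter_opp_comm, oppK. exact IHk.
Qed.

Lemma sum_lt_ext {R : NARing} n (f g : nat -> R) : (forall i, f i = g i) -> sum_lt n f = sum_lt n g.
Proof. intros H; induction n; simpl; auto. rewrite IHn, H. reflexivity. Qed.
Lemma sum_lt_add {R : NARing} n (f g h : nat -> R) : (forall i, h i = add (f i) (g i)) ->
  sum_lt n h = add (sum_lt n f) (sum_lt n g).
Proof. intros H; induction n; simpl. - rewrite add0r; auto. - rewrite IHn, H. apply add4. Qed.
Lemma sum_lt_zero {R : NARing} n (f : nat -> R) : (forall i, f i = zero) -> sum_lt n f = zero.
Proof. intros H; induction n; simpl; auto. rewrite IHn, H. apply add0r. Qed.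
Lemma sum_lt_opp {R : NARing} n (f g : nat -> R) : (forall i, g i = opp (f i)) -> sum_lt n g = opp (sum_lt n f).
Proof.
  intros H; induction n; simpl. - symmetry; apply opp0. - rewrite IHn, H, opp_add. reflexivity.
Qed.
Lemma sum_split {R : NARing} k (f : nat -> R) :
  sum_lt (S (S k)) f = add (add (f 0) (f 1)) (sum_lt (S (S k)) (fun i => if i <? 2 then zero else f i)).
Proof.
  induction k.
  - simpl. gnorm.
  - change (sum_lt (S (S (S k))) f) with (add (sum_lt (S (S k)) f) (f (S (S k)))).
    change (sum_lt (S (S (S k))) (fun i => if i <? 2 then zero else f i)) with
      (add (sum_lt (S (S k)) (fun i => if i <? 2 then zero else f i)) (if S (S k) <? 2 then zero else f (S (S k)))).
    rewrite IHk. simpl. gnorm.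
Qed.

Lemma D0 {R : NARing} (D : R -> R) k : lie_n_derivation (S (S k)) D -> D zero = zero.
Proof.
  intros H. specialize (H (fun _ => zero)). unfold p_ in H. simpl Nat.pred in H.
  rewrite pcomm_chain, lie_0l, chain_zero in H. rewrite H.
  apply sum_lt_zero. intros i. unfold p_; simpl Nat.pred. rewrite pcomm_chain.
  unfold upd. destruct i as [|[|i]]; simpl.
  - rewrite lie_0r, chain_zero; auto.
  - rewrite lie_0l, chain_zero; auto.
  - rewrite lie_0l, chain_zero; auto.
Qed.

Lemma lie2to3 {R : NARing} (D : R -> R) : lie_n_derivation 2 D -> lie_n_derivation 3 D.
Proof.
  intros H.
  assert (H2 : forall x y, D (lie x y) = add (lie (D x) y) (lie x (D y))).
  { intros x y. specialize (H (fun j => match j with 0 => x | _ => y end)).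
    unfold p_ in H. simpl in H. rewrite H, add0r. reflexivity. }
  intros xs. unfold p_. simpl. rewrite H2, H2, lie_addl. unfold upd; simpl. gnorm.
Qed.

Definition Pc {R : NARing} (k : nat) (e : R) (c : R) : R := chain k (fun _ => e) c.
Definition Rc {R : NARing} (k : nat) (e : R) (D : R -> R) (c : R) : R :=
  sum_lt (S (S k)) (fun i => if i <? 2 then zero else chain k (upd (fun _ => e) i (D e)) c).
Definition mk {R : NARing} (e x y : R) : nat -> R := fun j => match j with 0 => x | 1 => y | _ => e end.

Lemma Pc_add {R : NARing} k (e c d : R) : Pc k e (add c d) = add (Pc k e c) (Pc k e d).
Proof. apply chain_add. Qed.
Lemma Pc_opp {R : NARing} k (e c : R) : Pc k e (opp c) = opp (Pc k e c).
Proof. apply chain_opp. Qed.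
Lemma Pc_zero {R : NARing} k (e : R) : Pc k e zero = zero.
Proof. apply chain_zero. Qed.
Lemma Rc_add {R : NARing} k (e : R) D c d : Rc k e D (add c d) = add (Rc k e D c) (Rc k e D d).
Proof.
  apply sum_lt_add. intros i. destruct (i <? 2). - rewrite add0r; auto. - apply chain_add.
Qed.
Lemma Rc_opp {R : NARing} k (e : R) D c : Rc k e D (opp c) = opp (Rc k e D c).
Proof.
  apply sum_lt_opp. intros i. destruct (i <? 2). - rewrite opp0; auto. - apply chain_opp.
Qed.
Lemma Rc_zero {R : NARing} k (e : R) D : Rc k e D zero = zero.
Proof.
  apply sum_lt_zero. intros i. destruct (i <? 2); auto. apply chain_zero.
Qed.

Lemma EXP {R : NARing} (D : R -> R) k (e : R) (HD : lie_n_derivation (S (S k)) D) x y :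
  D (Pc k e (lie x y)) = add (add (Pc k e (lie (D x) y)) (Pc k e (lie x (D y)))) (Rc k e D (lie x y)).
Proof.
  pose proof (HD (mk e x y)) as H. unfold p_ in H. simpl Nat.pred in H.
  rewrite pcomm_chain in H. simpl (mk e x y 0) in H. simpl (mk e x y 1) in H.
  rewrite (chain_ext k (mk e x y) (fun _ => e)) in H
    by (intros [|[|j]] Hj; [lia|lia|reflexivity]).
  unfold Pc. rewrite H. rewrite sum_split. unfold p_; simpl Nat.pred. rewrite !pcomm_chain.
  unfold Rc. f_equal; [f_equal|].
  - unfold upd; simpl. apply chain_ext. intros [|[|j]] Hj; [lia|lia|reflexivity].
  - unfold upd; simpl. apply chain_ext. intros [|[|j]] Hj; [lia|lia|reflexivity].
  - apply sum_lt_ext. intros i. destruct (i <? 2) eqn:Hi; auto.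
    apply Nat.ltb_ge in Hi. rewrite pcomm_chain.
    assert (E0 : upd (mk e x y) i (D (mk e x y i)) 0 = x).
    { unfold upd. destruct (Nat.eqb_spec 0 i); [lia|reflexivity]. }
    assert (E1 : upd (mk e x y) i (D (mk e x y i)) 1 = y).
    { unfold upd. destruct (Nat.eqb_spec 1 i); [lia|reflexivity]. }
    rewrite E0, E1. apply chain_ext. intros j Hj. unfold upd.
    destruct (Nat.eqb_spec j i).
    + subst. destruct i as [|[|i]]; [lia|lia|reflexivity].
    + destruct j as [|[|j]]; [lia|lia|reflexivity].
Qed.

Lemma gcomb {R : NARing} (x y u v : R) : u = v -> x = add y (sub u v) -> x = y.
Proof. intros -> H. rewrite H. unfold sub. rewrite addrN, addr0. reflexivity. Qed.
Lemma gcomb' {R : NARing} (x y u v : R) : u = v -> x = add y (sub v u) -> x = y.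
Proof. intros -> H. rewrite H. unfold sub. rewrite addrN, addr0. reflexivity. Qed.

Ltac expd := repeat rewrite ?lie_addl, ?lie_addr, ?lie_oppl, ?lie_oppr, ?Pc_add, ?Rc_add, ?Pc_opp, ?Rc_opp.

Lemma main {R : NARing} (e : R) (Halt : alternative R) (Hee : mul e e = e)
  (D : R -> R) m (HD : lie_n_derivation (S (S (S m))) D) a b :
  P12 e a -> P21 e b -> D (add a b) = add (D a) (D b).
Proof.
  intros Ha Hb. set (k := S m) in *.
  set (a' := Nat.iter k opp a).
  assert (Ha' : P12 e a').
  { unfold a'. clear -Ha. generalize k. intros j. induction j as [|j IH]; simpl; auto.
    destruct IH as [H1 H2]. split; rewrite ?mulNl, ?mulNr, ?H1, ?H2; auto using opp0. }
  assert (Lea : lie e a' = a').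
  { unfold lie, sub. rewrite (proj1 Ha'), (proj2 Ha'), opp0, addr0. reflexivity. }
  assert (Lae : lie a' e = opp a').
  { unfold lie, sub. rewrite (proj1 Ha'), (proj2 Ha'), add0r. reflexivity. }
  assert (Lbe : lie b e = b).
  { unfold lie, sub. rewrite (proj1 Hb), (proj2 Hb), opp0, addr0. reflexivity. }
  assert (Pa : Pc k e a' = a).
  { unfold Pc. rewrite chain_neg by auto. unfold a'. apply iter_opp_inv. }
  assert (Pb : Pc k e b = b).
  { unfold Pc. apply chain_fix; auto. }
  assert (PJ : Pc k e (lie b a') = zero).
  { unfold Pc, k. apply chain_kill. apply J_comm; auto. }
  assert (PJ' : Pc k e (lie a' b) = zero).
  { rewrite lie_anti, Pc_opp, PJ. apply opp0. }
  assert (Pee : Pc k e (lie e e) = zero).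
  { rewrite lie_xx. apply Pc_zero. }
  pose proof (EXP D k e HD (add e b) (add e a')) as E1.
  assert (V : Pc k e (lie (add e b) (add e a')) = add a b).
  { rewrite lie_addl, !lie_addr, !Pc_add, Pee, Lea, Pa, Lbe, Pb, PJ. gnorm. }
  rewrite V in E1. clear V.
  pose proof (EXP D k e HD e (add e a')) as E2.
  assert (V : Pc k e (lie e (add e a')) = a).
  { rewrite !lie_addr, !Pc_add, Pee, Lea, Pa. gnorm. }
  rewrite V in E2. clear V.
  pose proof (EXP D k e HD (add e b) e) as E3.
  assert (V : Pc k e (lie (add e b) e) = b).
  { rewrite !lie_addl, !Pc_add, Pee, Lbe, Pb. gnorm. }
  rewrite V in E3. clear V.
  pose proof (EXP D k e HD (add e a') b) as E5.
  assert (V : Pc k e (lie (add e a') b) = Pc k e (lie e b)).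
  { rewrite !lie_addl, !Pc_add, PJ'. gnorm. }
  rewrite V in E5. clear V.
  pose proof (EXP D k e HD e b) as E5'. rewrite E5' in E5. clear E5'.
  pose proof (EXP D k e HD a' b) as E6. rewrite PJ', (D0 D k HD) in E6.
  pose proof (EXP D k e HD (add e b) a') as E7.
  assert (V : Pc k e (lie (add e b) a') = a).
  { rewrite !lie_addl, !Pc_add, PJ, Lea, Pa. gnorm. }
  rewrite V in E7. clear V.
  pose proof (EXP D k e HD e a') as E7'.
  assert (V : Pc k e (lie e a') = a) by (rewrite Lea; exact Pa).
  rewrite V in E7'. clear V. rewrite E7' in E7. clear E7'.
  rewrite E1, E2, E3.
  clearbody a' k.
  (apply (gcomb _ _ _ _ E7) + apply (gcomb' _ _ _ _ E7));
  (apply (gcomb _ _ _ _ E5) + apply (gcomb' _ _ _ _ E5));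
  (apply (gcomb _ _ _ _ E6) + apply (gcomb' _ _ _ _ E6));
  unfold sub; expd;
  rewrite ?(lie_anti e (D e)), ?(lie_anti b (D e)), ?(lie_anti b (D a')),
    ?(lie_anti b (D (add e a'))), ?(lie_anti b a');
  expd; rewrite ?(lie_xx e), ?Rc_zero, ?Pc_zero;
  gnorm.
Qed.

Theorem lemma2p3 (R : NARing) (e : R)
  (Halt : alternative R)
  (He : nontrivial_idempotent e)
  (Hi : forall a11 a22 : R, peirce e 1 1 a11 -> peirce e 2 2 a22 ->
          (forall x : R, peirce e 1 2 x -> lie (add a11 a22) x = zero) ->
          center (add a11 a22))
  (Hii : forall a11 a22 : R, peirce e 1 1 a11 -> peirce e 2 2 a22 ->
          (forall x : R, peirce e 2 1 x -> lie (add a11 a22) x = zero) ->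
          center (add a11 a22))
  (D : R -> R) (HD : lie_type_derivation D) :
  forall a12 b21 : R, peirce e 1 2 a12 -> peirce e 2 1 b21 ->
    D (add a12 b21) = add (D a12) (D b21).
Proof.
  intros a b Ha Hb.
  destruct He as [_ [Hee _]].
  assert (HD3 : exists m, lie_n_derivation (S (S (S m))) D).
  { destruct HD as [n [Hn HDn]].
    destruct n as [|[|[|k]]]; try lia.
    - exists 0. apply lie2to3; auto.
    - exists k. auto. }
  destruct HD3 as [m HDm].
  apply (main e Halt Hee D m HDm); [apply peirce12 | apply peirce21]; auto.
Qed.
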